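(* For any $R>0$ and any finite sequence of intervals $([x_i,y_i])_{i=1}^m$ (with $x_i\le y_i$), there exists a sequence of intervals $([s_i,t_i])_{i=1}^{m'}$ with $m'\le m$ such that: each $s_i$ belongs to $\{x_1,\dots,x_m\}$ and each $t_i$ belongs to $\{y_1,\dots,y_m\}$; $\sum_{i=1}^{m'}|t_i-s_i|\le 2mR+\sum_{i=1}^m|y_i-x_i|$; $\mathrm{d}([s_i,t_i],[s_j,t_j])\ge R$ for all $1\le i\ne j\le m'$; and $\bigcup_{i=1}^m[x_i,y_i]\subset\bigcup_{i=1}^{m'}[s_i,t_i]$.
   Context: For sets $A,B\subset\mathbb{R}$, $\mathrm{d}(A,B):=\inf\{|x-y|:x\in A,y\in B\}$ is the Euclidean distance between them. *)

(* Defs.v *)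
From HB Require Import structures.
From mathcomp Require Import all_boot all_order all_algebra.
From mathcomp Require Import all_classical all_reals all_analysis.
Set Implicit Arguments. Unset Strict Implicit. Unset Printing Implicit Defensive.
Import Order.TTheory GRing.Theory Num.Theory.
Local Open Scope classical_set_scope.
Local Open Scope ring_scope.

Definition set_dist (R : realType) (A B : set R) : R :=
  inf [set `|p.1 - p.2| | p in A `*` B].

(* Main.v *)
Require Import Defs.
From HB Require Import structures.
From mathcomp Require Import all_boot all_order all_algebra.
From mathcomp Require Import all_classical all_reals all_analysis.
From mathcomp Require Import lra.
Import Order.TTheory GRing.Theory Num.Theory.
Local Open Scope classical_set_scope.
Local Open Scope ring_scope.

Lemma not_pairwise_split (T : eqType) (e : rel T) (s : seq T) :
  ~~ pairwise e s -> exists p q s', perm_eq s [:: p, q & s'] /\ ~~ e p q.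
Proof.
elim: s => [|x s IH] //=. rewrite negb_and => /orP [/allPn [q qs nq] | /IH [p [q [s' [hp hn]]]]].
- exists x, q, (rem q s); split => //. rewrite perm_cons. exact: perm_to_rem.
- exists p, q, (x :: s'); split => //.
  rewrite -(perm_cons x) in hp; apply: (perm_trans hp).
  apply/permP => f /=. by rewrite addnCA (addnCA (f x)).
Qed.

Lemma hull_len (R : realType) (a b c d r : R) : 0 < r -> c < b + r -> a < d + r -> a <= b -> c <= d ->
  Num.max b d - Num.min a c <= (b - a) + (d - c) + r.
Proof. move=> h0 h1 h2 h3 h4; case: (leP a c) => h5; case: (leP b d) => h6; lra. Qed.

Section Main.
Variables (R : realType) (r : R).
Hypothesis hr : 0 < r.

Definition sepp (p q : R * R) : bool := (p.2 + r <= q.1) || (q.2 + r <= p.1).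
Definition lenp (p : R * R) : R := p.2 - p.1.
Definition okp (p : R * R) : bool := p.1 <= p.2.
Definition inI (z : R) (p : R * R) : bool := (p.1 <= z) && (z <= p.2).

Lemma merge_main n : forall L : seq (R * R), (size L <= n)%N -> all okp L ->
  exists M : seq (R * R), [/\ (size M <= size L)%N,
    ({subset map fst M <= map fst L} /\ {subset map snd M <= map snd L}),
    all okp M,
    \sum_(p <- M) lenp p + r * (size M)%:R <= \sum_(p <- L) lenp p + r * (size L)%:R &
    (pairwise sepp M /\
    forall z, has (inI z) L -> has (inI z) M)].
Proof.
elim: n => [|n IH] L hs hok.
  move: hs; rewrite leqn0 => /nilP ->; by exists [::]; split.
case: (boolP (pairwise sepp L)) => hpw.
  by exists L; split => //; split => //.
have [p [q [s' [hperm hn]]]] := not_pairwise_split _ _ _ hpw.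
have hsz : size L = (size s').+2 by rewrite (perm_size hperm).
have pL : p \in L by rewrite (perm_mem hperm) mem_head.
have qL : q \in L by rewrite (perm_mem hperm) !inE eqxx orbT.
have okpp : okp p by apply: (allP hok).
have okq : okp q by apply: (allP hok).
have oks' : all okp s'.
  apply/allP => u us; apply: (allP hok); rewrite (perm_mem hperm) !inE us.
  by rewrite !orbT.
set h := (Num.min p.1 q.1, Num.max p.2 q.2).
have okh : okp h.
  rewrite /okp /h /=. move: okpp okq; rewrite /okp => h1 h2.
  by rewrite ge_min !le_max h1.
have [M [hsM [hfst hsnd] hokM hsum [hpM hcov]]] :
   exists M : seq (R * R), [/\ (size M <= size (h :: s'))%N,
    ({subset map fst M <= map fst (h :: s')} /\ {subset map snd M <= map snd (h :: s')}),
    all okp M,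
    \sum_(p <- M) lenp p + r * (size M)%:R <= \sum_(p <- h :: s') lenp p + r * (size (h :: s'))%:R &
    (pairwise sepp M /\
    forall z, has (inI z) (h :: s') -> has (inI z) M)].
  apply: IH => /=; last by rewrite okh.
  by move: hs; rewrite hsz.
exists M; split => //.
- by rewrite hsz (leq_trans hsM) //= ltnW.
- split => z /[dup] zM.
  + move=> /hfst; rewrite (perm_mem (perm_map fst hperm)) /= !inE.
    case/orP => [/eqP -> | ->]; last by rewrite !orbT.
    by rewrite /h /= minEle; case: ifP => _; rewrite eqxx ?orbT.
  + move=> /hsnd; rewrite (perm_mem (perm_map snd hperm)) /= !inE.
    case/orP => [/eqP -> | ->]; last by rewrite !orbT.
    by rewrite /h /= maxEle; case: ifP => _; rewrite eqxx ?orbT.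
- apply: (le_trans hsum).
  rewrite (perm_big _ hperm) hsz !big_cons /= -!natr1.
  suff : lenp h <= lenp p + lenp q + r by lra.
  move: hn okpp okq; rewrite /sepp /okp /lenp /h /= negb_or -!ltNge => /andP[h1 h2] h3 h4.
  exact: (hull_len _ _ _ _ _ _ hr h1 h2 h3 h4).
- split => // z; rewrite (perm_has _ hperm) => hz; apply: hcov.
  move: hz; rewrite /= => /orP[hz|/orP[hz|->]]; last by rewrite orbT.
  + move: hz; rewrite /inI /h /= => /andP[a b].
    by rewrite ge_min a le_max b.
  + move: hz; rewrite /inI /h /= => /andP[a b].
    by rewrite ge_min a le_max b !orbT.
Qed.
End Main.
Arguments okp {R}. Arguments lenp {R}. Arguments inI {R}. Arguments sepp {R}.

Lemma dist_ge (R : realType) (r a b c d : R) : a <= b -> c <= d ->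
  (b + r <= c) || (d + r <= a) -> r <= set_dist [set` `[a, b]] [set` `[c, d]].
Proof.
move=> hab hcd hs; apply: lb_le_inf.
  exists `|a - c|; exists (a, c) => //; split => /=; rewrite in_itv /= ?lexx ?hab ?hcd //.
move=> _ [[u v] [/= hu hv] <-]; move: hu hv; rewrite !in_itv /= => /andP[h1 h2] /andP[h3 h4].
case/orP: hs => hs.
  rewrite distrC; apply: le_trans (ler_norm _); lra.
apply: le_trans (ler_norm _); lra.
Qed.

Theorem lemma5p6 (R : realType) (r : R) (m : nat) (x y : 'I_m -> R) :
  0 < r -> (forall i, x i <= y i) ->
  exists (m' : nat) (s t : 'I_m' -> R),
    [/\ (m' <= m)%N,
        (forall i, exists j, s i = x j) /\
        (forall i, exists j, t i = y j),
        \sum_(i < m') `|t i - s i| <= 2 * m%:R * r + \sum_(i < m) `|y i - x i|,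
        (forall i j : 'I_m', i != j -> r <= set_dist [set` `[s i, t i]] [set` `[s j, t j]]) &
        \bigcup_(i in [set: 'I_m]) [set` `[x i, y i]] `<=` \bigcup_(i in [set: 'I_m']) [set` `[s i, t i]]].
Proof.
move=> hr hxy.
set L := [seq (x i, y i) | i <- enum 'I_m].
have hokL : all (@okp R) L by apply/allP => p /mapP [i _ ->]; rewrite /okp /=.
have [M [hsM [hf hs] hokM hsum [hpM hcov]]] := merge_main _ _ hr (size L) L (leqnn _) hokL.
have sL : size L = m by rewrite size_map size_enum_ord.
set d0 := ((0 : R), (0 : R)).
have okn : forall i : 'I_(size M), okp (nth d0 M i).
  move=> i; exact: (allP hokM) _ (mem_nth _ (ltn_ord i)).
exists (size M), (fun i => (nth d0 M i).1), (fun i => (nth d0 M i).2).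
split.
- by rewrite -sL.
- split => i.
  + have : (nth d0 M i).1 \in map fst L by apply: hf; apply: map_f; apply: mem_nth.
    by case/mapP => p /mapP [j _ ->] /= ->; exists j.
  + have : (nth d0 M i).2 \in map snd L by apply: hs; apply: map_f; apply: mem_nth.
    by case/mapP => p /mapP [j _ ->] /= ->; exists j.
- have -> : \sum_(i < size M) `|(nth d0 M i).2 - (nth d0 M i).1| = \sum_(p <- M) lenp p.
    rewrite (big_nth d0) big_mkord; apply: eq_bigr => i _.
    by rewrite ger0_norm // subr_ge0; apply: okn.
  have -> : \sum_(i < m) `|y i - x i| = \sum_(p <- L) lenp p.
    rewrite big_map big_enum /=; apply: eq_bigr => i _.
    by rewrite ger0_norm // subr_ge0.
  rewrite sL in hsum.
  have h1 : 0 <= r * (size M)%:R by apply: mulr_ge0; [exact: ltW|exact: ler0n].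
  have h2 : 0 <= r * m%:R by apply: mulr_ge0; [exact: ltW|exact: ler0n].
  lra.
- move=> i j hij.
  have hsep : sepp r (nth d0 M i) (nth d0 M j).
    have hP := pairwiseP d0 hpM.
    case: (ltngtP i j) => hij'.
    + by apply: hP; rewrite ?inE /=.
    + have := hP j i (ltn_ord j) (ltn_ord i) hij'.
      by rewrite /sepp orbC.
    + by move: hij; rewrite (val_inj hij') eqxx.
  by apply: dist_ge; [apply: okn| apply: okn| exact: hsep].
- move=> z [i _ /=]; rewrite in_itv /= => /andP[a b].
  have : has (inI z) M.
    apply: hcov; apply/hasP; exists (x i, y i).
      by apply: map_f; rewrite mem_enum.
    by rewrite /inI /= a b.
  case/hasP => q qM hq.
  have hk : (index q M < size M)%N by rewrite index_mem.
  exists (Ordinal hk) => //=.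
  by rewrite nth_index // in_itv /=.
Qed.
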